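(* For all integers $3\le n\le m$, \[ \gamma_{2t}(K_n\Box K_n)\le\gamma_{2t}(K_n\Box K_m)\le\min\{2n,\ \gamma_{2t}(K_n\Box K_n)+m-n\}. \]
   Context: For a graph $G=(V,E)$, a set $S\subseteq V$ is a total $2$-dominating set if every vertex of $V$ (including those in $S$) is adjacent to at least $2$ vertices of $S$; $\gamma_{2t}(G)$ is the minimum cardinality of such a set. $G\Box H$ denotes the Cartesian product: vertex set $V(G)\times V(H)$, with $(u_1,v_1)\sim(u_2,v_2)$ iff either $u_1=u_2$ and $v_1\sim v_2$, or $v_1=v_2$ and $u_1\sim u_2$. $K_n$ is the complete graph on $n$ vertices. *)

(* Defs.v *)
From mathcomp Require Import all_boot.
Set Implicit Arguments. Unset Strict Implicit. Unset Printing Implicit Defensive.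

Definition total2dom (T : finType) (adj : rel T) (S : {set T}) : bool :=
  [forall v : T, 2 <= #|[set u in S | adj v u]|].

(* gamma_{2t}: minimum cardinality of a total 2-dominating set.
   (If none exists, the value is #|T|.+1; this never happens for the graphs
   used below.) *)
Definition gamma2t (T : finType) (adj : rel T) : nat :=
  \big[minn/#|T|.+1]_(S : {set T} | total2dom adj S) #|S|.

Definition Kadj (n : nat) : rel 'I_n := fun i j => i != j.

Definition cartprod (U V : finType) (a : rel U) (b : rel V) : rel (U * V) :=
  fun x y => ((x.1 == y.1) && b x.2 y.2) || ((x.2 == y.2) && a x.1 y.1).

Definition gamma2t_KK (n m : nat) : nat :=
  gamma2t (cartprod (@Kadj n) (@Kadj m)).

(* Main.v *)
Require Import Defs.
From mathcomp Require Import all_boot zify.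
Set Implicit Arguments. Unset Strict Implicit. Unset Printing Implicit Defensive.

Definition NB n m (S : {set 'I_n * 'I_m}) (v : 'I_n * 'I_m) :=
  [set u in S | cartprod (@Kadj n) (@Kadj m) v u].

Lemma adjE n m (a c : 'I_n) (b d : 'I_m) :
  cartprod (@Kadj n) (@Kadj m) (a, b) (c, d) =
  ((a == c) && (b != d)) || ((b == d) && (a != c)).
Proof. by []. Qed.

Lemma inNB n m (S : {set 'I_n * 'I_m}) v u :
  (u \in NB S v) = (u \in S) && cartprod (@Kadj n) (@Kadj m) v u.
Proof. by rewrite inE. Qed.

Lemma t2dP n m (S : {set 'I_n * 'I_m}) :
  reflect (forall v, 2 <= #|NB S v|) (total2dom (cartprod (@Kadj n) (@Kadj m)) S).
Proof. exact: forallP. Qed.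

Lemma gamma_le n m (S : {set 'I_n * 'I_m}) :
  total2dom (cartprod (@Kadj n) (@Kadj m)) S -> gamma2t_KK n m <= #|S|.
Proof.
move=> H; rewrite /gamma2t_KK /gamma2t -big_filter.
have : S \in [seq i <- index_enum _ | total2dom (cartprod (@Kadj n) (@Kadj m)) i].
  by rewrite mem_filter H mem_index_enum.
elim: [seq _ <- _ | _] => //= a s IH; rewrite in_cons big_cons => /orP [/eqP <-|/IH h].
  exact: geq_minl.
exact: leq_trans (geq_minr _ _) h.
Qed.

Lemma gamma_att n m (S0 : {set 'I_n * 'I_m}) :
  total2dom (cartprod (@Kadj n) (@Kadj m)) S0 ->
  exists S, total2dom (cartprod (@Kadj n) (@Kadj m)) S /\ gamma2t_KK n m = #|S|.
Proof.
move=> H0.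
pose Sm := [arg min_(S < S0 | total2dom (cartprod (@Kadj n) (@Kadj m)) S) #|S|].
have [S HS Hmin] : extremum_spec leq (fun S => total2dom (cartprod (@Kadj n) (@Kadj m)) S)
   (fun S => #|S|) Sm by apply: arg_minnP.
exists S; split => //; apply/eqP; rewrite eqn_leq gamma_le //=.
rewrite /gamma2t_KK /gamma2t.
apply: (big_ind (fun x => #|S| <= x)).
- by apply: leq_trans (max_card _) _.
- by move=> x y Hx Hy; rewrite leq_min Hx Hy.
- by move=> i Hi; apply: Hmin.
Qed.

Lemma col_count n m (S : {set 'I_n * 'I_m}) :
  (forall j, 2 <= #|[set u in S | u.2 == j]|) -> 2 * m <= #|S|.
Proof.
move=> H.
have -> : #|S| = \sum_(j : 'I_m) #|[set u in S | u.2 == j]|.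
  rewrite -sum1_card (partition_big (fun u : 'I_n * 'I_m => u.2) predT) //=.
  apply: eq_bigr => j _; rewrite -sum1_card; apply: eq_bigl => u; by rewrite inE.
rewrite mulnC -[X in X * 2]card_ord -sum_nat_const.
by apply: leq_sum => j _; apply: H.
Qed.
Lemma gamma_2n n m : 2 <= n -> 2 <= m ->
  exists S : {set 'I_n * 'I_m},
    total2dom (cartprod (@Kadj n) (@Kadj m)) S /\ #|S| <= 2 * n.
Proof.
move=> hn hm.
have h0n : 0 < n by lia. have h1n : 1 < n by lia.
have h0m : 0 < m by lia. have h1m : 1 < m by lia.
pose i0 := Ordinal h0n. pose i1 := Ordinal h1n.
pose j0 := Ordinal h0m. pose j1 := Ordinal h1m.
have nj : j0 != j1 by [].
have ni : i0 != i1 by [].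
exists (setX setT [set j0; j1]); split; last first.
  by rewrite cardsX cards2 nj cardsT card_ord mulnC.
apply/t2dP => [[i j]]; apply/card_gt1P.
have mem (a : 'I_n) (b : 'I_m) : ((a, b) \in setX setT [set j0; j1]) = (b == j0) || (b == j1).
  by rewrite !inE.
pose i' := if i == i0 then i1 else i0.
have hi' : i' != i by rewrite /i'; case: (i =P i0) => [->|/eqP h] //; rewrite eq_sym.
have e1 : (i == i') = false by apply/negbTE; rewrite eq_sym.
have e2 : (i' == i) = false by apply/negbTE.
have e3 : (j0 == j1) = false by apply/negbTE.
have e4 : (j1 == j0) = false by apply/negbTE; rewrite eq_sym.
case: (boolP (j == j0)) => [/eqP ->|h0].
  exists (i, j1), (i', j0); rewrite !inNB !mem !adjE !xpair_eqE !eqxx ?e1 ?e2 ?e3 ?e4 /=.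
  by [].
have h0' : (j0 == j) = false by apply/negbTE; rewrite eq_sym.
case: (boolP (j == j1)) => [/eqP ->|h1].
  exists (i, j0), (i', j1); rewrite !inNB !mem !adjE !xpair_eqE !eqxx ?e1 ?e2 ?e3 ?e4 /=.
  by [].
have h1' : (j1 == j) = false by apply/negbTE; rewrite eq_sym.
exists (i, j0), (i, j1); rewrite !inNB !mem !adjE !xpair_eqE !eqxx ?e3 ?e4 ?h0' ?h1' /=.
by rewrite h0 h1.
Qed.
Lemma adj_lift n m (j : 'I_m.+1) (a c : 'I_n) (b d : 'I_m) :
  cartprod (@Kadj n) (@Kadj m.+1) (a, lift j b) (c, lift j d) =
  cartprod (@Kadj n) (@Kadj m) (a, b) (c, d).
Proof. by rewrite !adjE (inj_eq lift_inj). Qed.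

Lemma del_lemma n m (T : {set 'I_n * 'I_m.+1}) (j : 'I_m.+1) :
  (forall i k, k != j -> 2 + ((i, j) \in T) <= #|NB T (i, k)|) ->
  gamma2t_KK n m <= #|T|.
Proof.
move=> H.
pose f := fun u : 'I_n * 'I_m => (u.1, lift j u.2).
have finj : injective f by move=> [a b] [c d] /= [-> h]; congr (_, _); apply: (@lift_inj _ j); exact: val_inj.
pose S' := [set u | f u \in T].
have HS : #|S'| <= #|T|.
  rewrite -(card_imset _ finj); apply: subset_leq_card; apply/subsetP => x /imsetP [u hu ->].
  by move: hu; rewrite inE.
apply: leq_trans (gamma_le _) HS.
apply/t2dP => [[i k]].
have hk : 2 + ((i, j) \in T) <= #|NB T (i, lift j k)| by apply: H; rewrite eq_sym neq_lift.
have claim : forall u, u \in NB T (i, lift j k) ->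
   (u = (i, j) /\ (i, j) \in T) \/ u \in f @: NB S' (i, k).
  move=> [a b]; rewrite inNB => /andP [hu ha].
  case: (boolP (j == b)) => [/eqP hb|hb].
    subst b; left; move: ha; rewrite adjE.
    have e : (lift j k == j) = false by rewrite eq_sym (negbTE (neq_lift j k)).
    by rewrite e /= orbF andbT => /eqP ->.
  right; case: (unlift_some hb) => k' hk' _; subst b.
  apply/imsetP; exists (a, k') => //.
  by rewrite inNB inE /= hu /= -(adj_lift j) ha.
have hsub : NB T (i, lift j k) \subset (i, j) |: f @: NB S' (i, k).
  apply/subsetP => u /claim [[-> _]|h]; by rewrite !inE ?eqxx ?h ?orbT.
case: (boolP ((i, j) \in T)) => hij.
  have := leq_trans hk (subset_leq_card hsub).
  rewrite cardsU1 (card_imset _ finj) hij.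
  case: (_ \notin _) => /= h; [by rewrite -(leq_add2l 1) addnC | by rewrite add0n in h; apply: leq_trans _ h].
have hsub2 : NB T (i, lift j k) \subset f @: NB S' (i, k).
  apply/subsetP => u /claim [[_ h]|//]; by rewrite h in hij.
have := leq_trans hk (subset_leq_card hsub2).
by rewrite (card_imset _ finj) (negbTE hij).
Qed.

Lemma ext_lemma n m (S : {set 'I_n * 'I_m}) (j : 'I_m.+1) r :
  total2dom (cartprod (@Kadj n) (@Kadj m)) S ->
  (forall i, exists l, (i, l) \in S) ->
  (exists l1 l2, [/\ l1 != l2, (r, l1) \in S & (r, l2) \in S]) ->
  gamma2t_KK n m.+1 <= #|S|.+1.
Proof.
move=> /t2dP H Hrow [l1 [l2 [hl hl1 hl2]]].
pose f := fun u : 'I_n * 'I_m => (u.1, lift j u.2).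
have finj : injective f by move=> [a b] [c d] /= [-> h]; congr (_, _); apply: (@lift_inj _ j); exact: val_inj.
pose T := (r, j) |: f @: S.
have HT : #|T| <= #|S|.+1.
  rewrite cardsU1 (card_imset _ finj); by case: (_ \notin _).
apply: leq_trans (gamma_le _) HT.
have fT : forall u, u \in S -> f u \in T.
  by move=> u hu; rewrite !inE; apply/orP; right; apply: imset_f.
apply/t2dP => [[i b]].
case: (boolP (j == b)) => [/eqP hb|hb].
  subst b; apply/card_gt1P.
  case: (boolP (i == r)) => [/eqP ->|hir].
    exists (f (r, l1)), (f (r, l2)); rewrite !inNB !fT //= !adjE /= !eqxx /=.
    rewrite !neq_lift; split => //.
    by apply/negP => /eqP /finj [] /eqP; apply/negP.
  have [l hl'] := Hrow i.
  exists (r, j), (f (i, l)); rewrite !inNB fT // !adjE /= !eqxx /= neq_lift.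
  rewrite !inE eqxx hir orbT /= ; split => //.
  by rewrite /f xpair_eqE (negbTE (neq_lift j l)) andbF.
case: (unlift_some hb) => k hk _; subst b.
apply: leq_trans (H (i, k)) _.
rewrite -(card_imset _ finj); apply: subset_leq_card; apply/subsetP => x /imsetP [[a c] hac ->].
move: hac; rewrite inNB => /andP [hu ha].
by rewrite inNB fT //= adj_lift.
Qed.

Definition colS n m (S : {set 'I_n * 'I_m}) (j : 'I_m) := [set u in S | u.2 == j].

Lemma rows_lemma n m (S : {set 'I_n * 'I_m}) : 0 < n ->
  total2dom (cartprod (@Kadj n) (@Kadj m)) S ->
  ((forall i, exists l, (i, l) \in S) /\
     exists r l1 l2, [/\ l1 != l2, (r, l1) \in S & (r, l2) \in S])
  \/ (forall j, 2 <= #|colS S j|).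
Proof.
move=> hn0 /t2dP HS.
case: (boolP [exists r, [exists l1, [exists l2,
           [&& l1 != l2, (r, l1) \in S & (r, l2) \in S]]]]) => Htwo.
  case: (boolP [forall i, [exists l, (i, l) \in S]]) => Hall.
    left; split.
      by move=> i; have /existsP := forallP Hall i.
    move/existsP: Htwo => [r /existsP [l1 /existsP [l2 /and3P [h1 h2 h3]]]].
    by exists r, l1, l2.
  right => j; move: Hall; rewrite negb_forall => /existsP [i0].
  rewrite negb_exists => /forallP hi0.
  apply: leq_trans (HS (i0, j)) (subset_leq_card _).
  apply/subsetP => [[a b]]; rewrite inNB !inE adjE => /andP [hab /orP [/andP [/eqP e _]|/andP [/eqP e _]]].
    by subst a; move: (hi0 b); rewrite hab.
  by rewrite hab e eqxx.
have hrow : forall r l1 l2, (r, l1) \in S -> (r, l2) \in S -> l1 = l2.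
  move=> r l1 l2 h1 h2; apply/eqP; apply: contraNT Htwo => hne.
  apply/existsP; exists r; apply/existsP; exists l1; apply/existsP; exists l2.
  by rewrite hne h1 h2.
right => j.
case: (boolP [exists x, (x, j) \in S]) => Hx.
  move/existsP: Hx => [x hx].
  apply: leq_trans (HS (x, j)) (subset_leq_card _).
  apply/subsetP => [[a b]]; rewrite inNB !inE adjE => /andP [hab /orP [/andP [/eqP e hb]|/andP [/eqP e _]]].
    subst a; by rewrite (hrow x j b hx hab) eqxx in hb.
  by rewrite hab e eqxx.
have i0 : 'I_n := Ordinal hn0.
move: (HS (i0, j)) => /card_gt1P [[a1 b1] [[a2 b2] [h1 h2 hne]]].
move: h1 h2; rewrite !inNB !adjE => /andP [s1 /orP [/andP [/eqP e1 _]|/andP [/eqP e1 _]]];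
  last by subst b1; move/existsP: Hx; case; exists a1.
move=> /andP [s2 /orP [/andP [/eqP e2 _]|/andP [/eqP e2 _]]];
  last by subst b2; move/existsP: Hx; case; exists a2.
subst a1 a2; by rewrite (hrow _ _ _ s1 s2) eqxx in hne.
Qed.

Lemma step_a n m (S : {set 'I_n * 'I_m.+1}) : 3 <= n -> n <= m ->
  total2dom (cartprod (@Kadj n) (@Kadj m.+1)) S ->
  gamma2t_KK n m <= #|S| \/ 2 * n <= #|S|.
Proof.
move=> hn hnm HS0; have /t2dP HS := HS0.
case: (boolP [forall j, 2 <= #|colS S j|]) => Hc.
  right; have := col_count (fun j => forallP Hc j); lia.
left; move: Hc; rewrite negb_forall => /existsP [j]; rewrite -ltnNge => hj.
have huniq : forall x y, (x, j) \in S -> (y, j) \in S -> x = y.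
  move=> x y hx hy; apply/eqP; apply: contraTT hj => hne; rewrite -leqNgt.
  apply/card_gt1P; exists (x, j), (y, j); rewrite !inE hx hy eqxx /=.
  by rewrite xpair_eqE eqxx andbT.
case: (boolP [exists x, (x, j) \in S]) => Hx; last first.
  apply: (del_lemma (j := j)) => i k hkj.
  have -> : ((i, j) \in S) = false.
    by apply/negbTE; apply: contra Hx => h; apply/existsP; exists i.
  exact: HS.
move/existsP: Hx => [x hx].
case: (boolP [exists k0, (x, k0) \notin S]) => Hk; last first.
  apply: (del_lemma (j := j)) => i k hkj.
  case: (boolP ((i, j) \in S)) => hij; last exact: (HS (i, k)).
  have ex := huniq _ _ hij hx; subst i.
  have hsub : [set (x, l) | l in [set~ k]] \subset NB S (x, k).
    apply/subsetP => _ /imsetP [l hl ->].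
    rewrite inNB adjE eqxx /=; rewrite !inE in hl; rewrite eq_sym hl andbT /=.
    move: Hk; rewrite negb_exists => /forallP /(_ l); by rewrite negbK.
  apply: leq_trans (subset_leq_card hsub).
  rewrite card_imset; last by move=> a b [].
  by rewrite cardsC1 card_ord /=; lia.
move/existsP: Hk => [k0 hk0].
have hk0j : k0 != j by apply: contraNneq hk0 => ->.
pose T := (x, k0) |: (S :\ (x, j)).
have HT : #|T| <= #|S|.
  rewrite [X in _ <= X](cardsD1 (x, j)) hx cardsU1 add1n; by case: (_ \notin _).
apply: leq_trans HT; apply: (del_lemma (j := j)) => i k hkj.
have -> : ((i, j) \in T) = false.
  rewrite !inE xpair_eqE (eq_sym j k0) (negbTE hk0j) andbF /=.
  case: (boolP ((i, j) \in S)) => h; last by rewrite andbF.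
  by rewrite (huniq _ _ h hx) eqxx.
case: (boolP ((i, k) == (x, k0))) => [/eqP [-> ->]| hne].
  apply: leq_trans (HS (x, j)) (subset_leq_card _).
  apply/subsetP => [[a b]]; rewrite !inNB adjE => /andP [hab hadj].
  have hbj : b != j.
    apply/negP => /eqP e; subst b; have ea := huniq _ _ hab hx; subst a.
    by move: hadj; rewrite !eqxx.
  have ea : a = x.
    by move: hadj; rewrite (eq_sym j b) (negbTE hbj) /= orbF => /andP [/eqP ->].
  subst a.
  have hbk : b != k0 by apply: contraNneq hk0 => <-.
  rewrite !inE xpair_eqE eqxx (negbTE hbk) /= xpair_eqE (negbTE hbj) /= hab adjE eqxx /=.
  by rewrite eq_sym hbk.
pose g := fun u => if u == (x, j) then (x, k0) else u.
have ginj : {in NB S (i, k) &, injective g}.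
  move=> u1 u2; rewrite !inNB => /andP [h1 _] /andP [h2 _]; rewrite /g.
  case: eqP => [-> | _]; case: eqP => [-> | _] //.
    by move=> e; rewrite -e in h2; rewrite h2 in hk0.
  by move=> e; rewrite e in h1; rewrite h1 in hk0.
apply: leq_trans (HS (i, k)) _; rewrite -(card_in_imset ginj).
apply: subset_leq_card; apply/subsetP => _ /imsetP [u hu ->].
move: hu; rewrite inNB => /andP [hu hadj]; rewrite /g.
case: eqP => [eu|/eqP neu].
  subst u; move: hadj; rewrite adjE (negbTE hkj) /= orbF => /andP [/eqP ei _]; subst i.
  rewrite inNB !inE eqxx /= adjE eqxx /=.
  by move: hne; rewrite xpair_eqE eqxx /= => ->.
by rewrite inNB !inE neu hu hadj orbT.
Qed.

Lemma gamma_le2n n m : 2 <= n -> 2 <= m -> gamma2t_KK n m <= 2 * n.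
Proof.
move=> hn hm; have [S [HS hS]] := gamma_2n hn hm.
exact: leq_trans (gamma_le HS) hS.
Qed.

Lemma gamma_attKK n m : 2 <= n -> 2 <= m ->
  exists S : {set 'I_n * 'I_m},
    total2dom (cartprod (@Kadj n) (@Kadj m)) S /\ gamma2t_KK n m = #|S|.
Proof.
move=> hn hm; have [S [HS _]] := gamma_2n hn hm; exact: gamma_att HS.
Qed.

Lemma a_main n : 3 <= n -> forall m, n <= m -> forall S : {set 'I_n * 'I_m},
  total2dom (cartprod (@Kadj n) (@Kadj m)) S -> gamma2t_KK n n <= #|S|.
Proof.
move=> hn; elim => [|m IH] hnm S HS; first by lia.
case: (ltngtP n m.+1) => [hlt|hgt|heq]; first last.
- subst n; exact: gamma_le.
- by lia.
have hle : n <= m by [].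
have [h|h] := step_a hn hle HS.
  have [S' [HS' e]] := gamma_attKK (n := n) (m := m) (ltnW hn) (leq_trans (ltnW hn) hle).
  apply: leq_trans (IH hle S' HS') _; by rewrite -e.
by apply: leq_trans (gamma_le2n (ltnW hn) (ltnW hn)) h.
Qed.

Lemma c_main n : 3 <= n -> forall m, n <= m ->
  gamma2t_KK n m <= gamma2t_KK n n + (m - n).
Proof.
move=> hn; elim => [|m IH] hnm; first by lia.
case: (ltngtP n m.+1) => [hlt|hgt|heq]; first last.
- by subst n; rewrite subnn addn0.
- by lia.
have hle : n <= m by [].
have [S [HS e]] := gamma_attKK (n := n) (m := m) (ltnW hn) (leq_trans (ltnW hn) hle).
have IH' := IH hle.
have hstep : gamma2t_KK n m.+1 <= (gamma2t_KK n m).+1.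
  rewrite e; case: (rows_lemma (ltnW (ltnW hn)) HS) => [[Hall [r [l1 [l2 H]]]]|Hc].
    apply: (@ext_lemma n m S ord_max r HS Hall); by exists l1, l2.
  have := col_count Hc.
  have := gamma_le2n (n := n) (m := m.+1) (ltnW hn) (leq_trans (ltnW hn) (ltnW hlt)).
  lia.
lia.
Qed.

Theorem proposition16 (n m : nat) (hn : 3 <= n) (hnm : n <= m) :
  gamma2t_KK n n <= gamma2t_KK n m /\
  gamma2t_KK n m <= minn (2 * n) (gamma2t_KK n n + (m - n)).
Proof.
split.
  have [S [HS ->]] := gamma_attKK (n := n) (m := m) (ltnW hn) (leq_trans (ltnW hn) hnm).
  exact: a_main hn m hnm S HS.
rewrite leq_min; apply/andP; split.
  exact: gamma_le2n (ltnW hn) (leq_trans (ltnW hn) hnm).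
exact: c_main.
Qed.
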